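(* Let $G$ be an optimal digraph on $n$ vertices. Then $$\frac{3n}{4} - \frac{1}{2} - \frac{\epsilon_G}{4} < \alpha_G + \beta_G < \frac{3n}{4} + \frac{1}{2} + \frac{\epsilon_G}{4}.$$ Moreover, if some vertex is incident with a longest edge but with no shortest non-edge, then $\alpha_G + \beta_G < 3n/4 + \epsilon_G/4$; and if some vertex is incident with a shortest non-edge but with no longest edge, then $\alpha_G + \beta_G > 3n/4 - \epsilon_G/4$.
   Context: Digraphs are finite, loopless, with at most one edge $uv$ per ordered pair. A digraph is $2$-free if no distinct $u,v$ have both $uv,vu$ as edges. A circular interval digraph is a digraph together with a fixed arrangement of its vertices in a circle such that for all distinct $u,v,w$ in clockwise order with $uw\in E(G)$, also $uv,vw\in E(G)$. For distinct $u,v$, $d(u,v) = 1 + |\{w: u,w,v \text{ distinct, in clockwise order}\}|$; this is the length of the ordered pair $uv$. A non-edge is an ordered pair $(u,v)$ of distinct vertices with neither $uv$ nor $vu$ an edge; its length is $d(u,v)$. $\alpha_G$ is the minimum length of a non-edge ($\infty$ if none) and $\beta_G$ the maximum length of an edge ($0$ if none). A longest edge is an edge of length $\beta_G$; a shortest non-edge is a non-edge of length $\alpha_G$. A vertex $x$ is incident with a pair $(u,v)$ if $x\in\{u,v\}$. $\epsilon_G=0$ if $\beta_G>\alpha_G$ and $\epsilon_G=1$ if $\beta_G\le\alpha_G$. $\xi(G)$ is the number of pairs $(uv,(w,x))$ with $uv\in E(G)$, $(w,x)$ a non-edge, $d(u,v)>d(w,x)$. $\tilde P_3(G)$ is the number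 of triples $(a,b,c)$ of distinct vertices with $ab,bc\in E(G)$ and $ac,ca\notin E(G)$. For fixed $n\ge 4$, $G$ is optimal if it is a $2$-free circular interval digraph on $n$ vertices maximizing $\tilde P_3$ among all such digraphs and, subject to this, minimizing $\xi(G)$. *)

(* Defs.v *)
From mathcomp Require Import all_boot all_order all_algebra.
Set Implicit Arguments. Unset Strict Implicit. Unset Printing Implicit Defensive.

(* Digraphs on n vertices with a fixed circular arrangement: vertices are 'I_n,
   arranged clockwise in the order 0, 1, ..., n-1.  A digraph is a relation E. *)

(* length d(u,v) = 1 + #{w strictly between u and v clockwise} = (v - u) mod n *)
Definition dist n (u v : 'I_n) : nat := (v + n - u) %% n.

Definition cw n (u v w : 'I_n) : bool :=
  [&& u != v, v != w, u != w & dist u v < dist u w].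

Definition loopless n (E : rel 'I_n) : Prop := forall u, ~~ E u u.

Definition two_free n (E : rel 'I_n) : Prop :=
  forall u v, u != v -> ~~ (E u v && E v u).

Definition circ_interval n (E : rel 'I_n) : Prop :=
  forall u v w, cw u v w -> E u w -> E u v && E v w.

Definition cid2 n (E : rel 'I_n) : Prop :=
  [/\ loopless E, two_free E & circ_interval E].

Definition nonedge n (E : rel 'I_n) (u v : 'I_n) : bool :=
  [&& u != v, ~~ E u v & ~~ E v u].

Definition xi n (E : rel 'I_n) : nat :=
  #|[set p : ('I_n * 'I_n) * ('I_n * 'I_n) |
      [&& E p.1.1 p.1.2, nonedge E p.2.1 p.2.2 &
          dist p.2.1 p.2.2 < dist p.1.1 p.1.2]]|.

Definition P3 n (E : rel 'I_n) : nat :=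
  #|[set t : 'I_n * 'I_n * 'I_n |
      [&& t.1.1 != t.1.2, t.1.2 != t.2, t.1.1 != t.2,
          E t.1.1 t.1.2, E t.1.2 t.2, ~~ E t.1.1 t.2 & ~~ E t.2 t.1.1]]|.

Definition optimal n (E : rel 'I_n) : Prop :=
  [/\ cid2 E,
      (forall E' : rel 'I_n, cid2 E' -> P3 E' <= P3 E) &
      (forall E' : rel 'I_n, cid2 E' -> P3 E' = P3 E -> xi E <= xi E')].

(* alpha_G : minimum length of a non-edge; None encodes infinity *)
Definition alphaG n (E : rel 'I_n) : option nat :=
  if [exists p : 'I_n * 'I_n, nonedge E p.1 p.2]
  then Some (\big[minn/n]_(p : 'I_n * 'I_n | nonedge E p.1 p.2) dist p.1 p.2)
  else None.

(* beta_G : maximum length of an edge; 0 if none *)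
Definition betaG n (E : rel 'I_n) : nat :=
  \max_(p : 'I_n * 'I_n | E p.1 p.2) dist p.1 p.2.

(* epsilon_G = 0 if beta > alpha, 1 if beta <= alpha (alpha = infinity gives 1) *)
Definition epsG n (E : rel 'I_n) : nat :=
  match alphaG E with
  | Some a => if a < betaG E then 0 else 1
  | None => 1
  end.

Definition incident n (x u v : 'I_n) : bool := (x == u) || (x == v).

Definition on_longest_edge n (E : rel 'I_n) (x : 'I_n) : Prop :=
  exists u v, [&& E u v, dist u v == betaG E & incident x u v].

Definition on_shortest_nonedge n (E : rel 'I_n) (x : 'I_n) : Prop :=
  exists u v, [/\ nonedge E u v, alphaG E = Some (dist u v) & incident x u v].

(* Main.v *)
Require Import Defs.
From mathcomp Require Import all_boot all_order all_algebra.
From mathcomp Require Import zify ring lra.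

Set Implicit Arguments. Unset Strict Implicit. Unset Printing Implicit Defensive.

Section Dist.
Variable n : nat.
Implicit Types u v w c : 'I_n.

Lemma distE u v : dist u v = if u <= v then v - u else v + n - u.
Proof.
rewrite /dist; have hu := ltn_ord u; have hv := ltn_ord v.
case: leqP => h.
  have -> : v + n - u = (v - u) + n by lia.
  by rewrite modnDr modn_small //; lia.
by rewrite modn_small //; lia.
Qed.

Lemma dist_lt u v : dist u v < n.
Proof. rewrite distE; have := ltn_ord u; have := ltn_ord v; case: (leqP u v) => h h1 h2; lia. Qed.

Lemma ord_eqE u v : (u == v) = (nat_of_ord u == nat_of_ord v).
Proof. by []. Qed.

Lemma dist0 u v : (dist u v == 0) = (u == v).
Proof.
rewrite distE ord_eqE; have := ltn_ord u; have := ltn_ord v.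
case: (leqP u v) => h1 h2 h3; apply/idP/idP; lia.
Qed.

Lemma dist_pos u v : u != v -> 0 < dist u v.
Proof. by rewrite -dist0 lt0n. Qed.

Lemma dist_uu u : dist u u = 0.
Proof. by apply/eqP; rewrite dist0. Qed.

Lemma dist_sym u v : u != v -> dist u v + dist v u = n.
Proof.
rewrite !distE ord_eqE; have := ltn_ord u; have := ltn_ord v.
case: (leqP u v); case: (leqP v u); lia.
Qed.

Lemma dist_tri u v w :
  dist u v + dist v w = dist u w + (if dist u v <= dist u w then 0 else n).
Proof.
rewrite !distE; have := ltn_ord u; have := ltn_ord v; have := ltn_ord w.
case: (leqP u v); case: (leqP v w); case: (leqP u w) => h1 h2 h3 h4 h5 h6;
  case: ifP; lia.
Qed.

Lemma dist_injl v : injective (dist v).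
Proof.
move=> a b; rewrite !distE => h; apply/val_inj => /=.
move: h; have := ltn_ord a; have := ltn_ord b; have := ltn_ord v.
case: (leqP v a); case: (leqP v b); lia.
Qed.

Lemma dist_injr u : injective (fun c => dist c u).
Proof.
move=> a b; rewrite /= !distE => h; apply/val_inj => /=.
move: h; have := ltn_ord a; have := ltn_ord b; have := ltn_ord u.
case: (leqP a u); case: (leqP b u); lia.
Qed.

Lemma card_lt k : k <= n -> #|[set j : 'I_n | j < k]| = k.
Proof.
elim: k => [|k IH] hk.
  by rewrite (_ : [set j : 'I_n | j < 0] = set0) ?cards0 //; apply/setP => j; rewrite !inE.
have hk' : k < n by [].
have -> : [set j : 'I_n | j < k.+1] = Ordinal hk' |: [set j : 'I_n | j < k].
  apply/setP => j; rewrite !inE ord_eqE /= ltnS leq_eqVlt.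
  by [].
rewrite cardsU1 IH ?inE /= ?ltnn //; lia.
Qed.

Lemma card_range lo hi : hi < n -> #|[set j : 'I_n | lo < j <= hi]| = hi - lo.
Proof.
move=> h.
case: (leqP hi lo) => hl.
  rewrite (_ : [set j : 'I_n | lo < j <= hi] = set0) ?cards0; first lia.
  by apply/setP => j; rewrite !inE; apply/negP; lia.
have -> : [set j : 'I_n | lo < j <= hi] =
   [set j : 'I_n | j < hi.+1] :\: [set j : 'I_n | j < lo.+1].
  by apply/setP => j; rewrite !inE; lia.
rewrite cardsD.
have -> : [set j : 'I_n | j < hi.+1] :&: [set j : 'I_n | j < lo.+1] =
   [set j : 'I_n | j < lo.+1] by apply/setP => j; rewrite !inE; lia.
rewrite !card_lt //; lia.
Qed.

Lemma coord_onto (f : 'I_n -> nat) : injective f -> (forall c, f c < n) ->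
  forall k, k < n -> exists c, f c = k.
Proof.
move=> fi fl k hk.
pose g c := Ordinal (fl c).
have gi : injective g by move=> a b /(congr1 val) /= /fi.
have := inj_card_onto gi (leqnn _) (Ordinal hk).
case/codomP => c /(congr1 val) /= ->; by exists c.
Qed.

Lemma card_coord (f : 'I_n -> nat) (P : pred nat) : injective f -> (forall c, f c < n) ->
  #|[set c | P (f c)]| = #|[set j : 'I_n | P j]|.
Proof.
move=> fi fl.
pose g c := Ordinal (fl c).
have gi : injective g by move=> a b /(congr1 val) /= /fi.
rewrite -(card_imset _ gi); apply: eq_card => j; rewrite [in RHS]inE.
apply/imsetP/idP.
  by case=> c; rewrite inE => hc ->.
move=> hj; have [c hc] := coord_onto fi fl (ltn_ord j).
exists c; first by rewrite inE hc.
by apply/val_inj; rewrite /= hc.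
Qed.

Lemma card_coord_range (f : 'I_n -> nat) lo hi : injective f -> (forall c, f c < n) ->
  hi < n -> #|[set c | lo < f c <= hi]| = hi - lo.
Proof.
move=> fi fl h.
by rewrite (card_coord (fun x => lo < x <= hi) fi fl) card_range.
Qed.

Lemma interval_set (f : 'I_n -> nat) (S : {set 'I_n}) :
  injective f -> (forall c, f c < n) ->
  (forall c, c \in S -> 0 < f c) ->
  (forall c c', c \in S -> 0 < f c' <= f c -> c' \in S) ->
  S = [set c | 0 < f c <= #|S|].
Proof.
move=> fi fl pos down.
pose r := \max_(c in S) f c.
have eqS : S = [set c | 0 < f c <= r].
  apply/setP => c; rewrite inE; apply/idP/idP.
    by move=> hc; rewrite pos //=; rewrite /r; exact: (@leq_bigmax_cond _ (fun c => c \in S) f c hc).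
  case/andP => h1 h2.
  have hS : 0 < #|S|.
    rewrite lt0n; apply/negP => /eqP/cards0_eq => S0.
    move: h2; rewrite /r S0 big_pred0 ?leqn0 => [h|x]; last by rewrite inE.
    by move: h1; rewrite (eqP h).
  have [c0 hc0 e] := eq_bigmax_cond f hS.
  apply: (down c0) => //; rewrite h1 /=; rewrite -e; exact h2.
have [hS|hS] := posnP #|S|.
  rewrite hS; apply/setP => c; rewrite inE.
  move/cards0_eq: hS => ->; rewrite inE; apply/esym/negP; lia.
have rn : r < n by rewrite /r; have [c0 _ ->] := eq_bigmax_cond f hS; exact: fl.
have cardS : #|S| = r.
  by rewrite {1}eqS (card_coord_range 0 fi fl) ?subn0.
by rewrite cardS.
Qed.

Lemma dist_tri' u v w :
  (dist u v <= dist u w /\ dist u v + dist v w = dist u w) \/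
  (dist u w < dist u v /\ dist u v + dist v w = dist u w + n).
Proof. have := dist_tri u v w; case: leqP => h e; [left|right]; lia. Qed.

End Dist.

Set Implicit Arguments. Unset Strict Implicit. Unset Printing Implicit Defensive.

Ltac dt a b c := have ? := dist_tri' a b c.
Ltac dl a b := have ? := dist_lt a b.

Section G.
Variable n : nat.
Variable E : rel 'I_n.
Hypothesis hE : cid2 E.
Implicit Types u v w a b c : 'I_n.

Lemma edge_neq u v : E u v -> u != v.
Proof. case: hE => hl _ _; apply: contraTneq => ->; exact: hl. Qed.

Lemma edge_asym u v : E u v -> ~~ E v u.
Proof. move=> h; case: hE => _ h2 _; have := h2 _ _ (edge_neq h); by rewrite h. Qed.

Lemma intv_out u v w : E u w -> 0 < dist u v < dist u w -> E u v && E v w.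
Proof.
move=> huw /andP[h1 h2]; case: hE => _ _ hi; apply: hi huw.
rewrite /cw h2 !andbT.
have nuv : u != v by rewrite -dist0 -lt0n.
have nuw : u != w by rewrite -dist0 -lt0n; lia.
have nvw : v != w by apply: contraTneq h2 => ->; rewrite ltnn.
by rewrite nuv nvw nuw.
Qed.

Lemma intv_in u v w : E u w -> 0 < dist v w < dist u w -> E u v && E v w.
Proof.
move=> huw h; apply: intv_out => //.
have nuv : u != v by apply/negP => /eqP e; move: h; rewrite e; lia.
have := dist_pos nuv; dt u v w; dl u v; dl v w; dl u w; lia.
Qed.

Lemma out_adj a u v : E a u -> E a v -> u != v -> E u v || E v u.
Proof.
move=> h1 h2 nuv.
have nau := edge_neq h1; have nav := edge_neq h2.
have hd : dist a u != dist a v by apply: contra nuv => /eqP/dist_injl ->.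
case: (ltngtP (dist a u) (dist a v)) hd => // hl _.
  by have /andP[_ ->] := intv_out h2 (introT andP (conj (dist_pos nau) hl)).
by have /andP[_ ->] := intv_out h1 (introT andP (conj (dist_pos nav) hl)); rewrite orbT.
Qed.

Lemma in_adj c u v : E u c -> E v c -> u != v -> E u v || E v u.
Proof.
move=> h1 h2 nuv.
have nuc := edge_neq h1; have nvc := edge_neq h2.
have hd : dist u c != dist v c by apply: contra nuv => /eqP/dist_injr ->.
case: (ltngtP (dist u c) (dist v c)) hd => // hl _.
  by have /andP[-> _] := intv_in h2 (introT andP (conj (dist_pos nuc) hl)); rewrite orbT.
by have /andP[-> _] := intv_in h1 (introT andP (conj (dist_pos nvc) hl)).
Qed.

Definition OUT v := [set c | E v c].
Definition IN u := [set a | E a u].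

Lemma out_char v : OUT v = [set c | 0 < dist v c <= #|OUT v|].
Proof.
apply: interval_set (@dist_injl n v) (dist_lt v) _ _.
  by move=> c; rewrite inE => /edge_neq /dist_pos.
move=> c c'; rewrite !inE => hc /andP[h1 h2].
case: (ltngtP (dist v c') (dist v c)) h2 => // h _.
  by have /andP[] := intv_out hc (introT andP (conj h1 h)).
by move/dist_injl: h => ->.
Qed.

Lemma in_char u : IN u = [set a | 0 < dist a u <= #|IN u|].
Proof.
apply: interval_set (@dist_injr n u) (fun c => dist_lt c u) _ _.
  by move=> c; rewrite inE => /edge_neq /dist_pos.
move=> c c'; rewrite !inE => hc /andP[h1 h2].
case: (ltngtP (dist c' u) (dist c u)) h2 => // h _.
  by have /andP[] := intv_in hc (introT andP (conj h1 h)).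
by move/(@dist_injr n u): h => ->.
Qed.

End G.

Section AB.
Variable n : nat.
Variable E : rel 'I_n.
Implicit Types u v w a b c : 'I_n.

Lemma beta_ge u v : E u v -> dist u v <= betaG E.
Proof.
move=> h; rewrite /betaG.
exact: (@leq_bigmax_cond _ (fun p : 'I_n * 'I_n => E p.1 p.2) (fun p => dist p.1 p.2) (u, v) h).
Qed.

Lemma beta_att u v : E u v -> exists a b, E a b /\ dist a b = betaG E.
Proof.
move=> h.
have hS : 0 < #|[pred p : 'I_n * 'I_n | E p.1 p.2]|.
  by apply/card_gt0P; exists (u, v).
have [[a b] hab e] := eq_bigmax_cond (fun p : 'I_n * 'I_n => dist p.1 p.2) hS.
by exists a, b; split => //; rewrite /betaG e.
Qed.

Lemma beta_lt u : betaG E < n.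
Proof.
rewrite /betaG; elim/big_ind: _ => //.
  by apply: (leq_ltn_trans (leq0n u)).
  by move=> x y hx hy; rewrite gtn_max hx hy.
by move=> [a b] _; exact: dist_lt.
Qed.

Lemma nonedge_sym u v : nonedge E u v = nonedge E v u.
Proof. by rewrite /nonedge eq_sym; case: (E u v); case: (E v u); case: (v != u). Qed.

Lemma bigmin_le (I : eqType) (r : seq I) (P : pred I) (F : I -> nat) x0 p :
  p \in r -> P p -> \big[minn/x0]_(i <- r | P i) F i <= F p.
Proof.
elim: r => // a r IH; rewrite inE big_cons => /orP[/eqP <-|hr] hp.
  by rewrite hp geq_minl.
case: ifP => _; last exact: IH.
by apply: leq_trans (geq_minr _ _) (IH hr hp).
Qed.

Lemma alpha_spec (a : nat) : alphaG E = Some a ->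
  (forall u v, nonedge E u v -> a <= dist u v) /\
  exists u v, nonedge E u v /\ dist u v = a.
Proof.
rewrite /alphaG; case: ifP => // /existsP [[u0 v0] h0] [<-].
split.
  move=> u v h.
  exact: (@bigmin_le _ _ (fun p : _ * _ => nonedge E p.1 p.2) (fun p => dist p.1 p.2) n (u,v) (mem_index_enum _) h).
have : (\big[minn/n]_(p | nonedge E p.1 p.2) dist p.1 p.2 == n) ||
   [exists p : 'I_n * 'I_n, nonedge E p.1 p.2 &&
         (dist p.1 p.2 == \big[minn/n]_(p | nonedge E p.1 p.2) dist p.1 p.2)].
  set m := \big[minn/n]_(p | _) _.
  have : m = n \/ exists p : 'I_n * 'I_n, nonedge E p.1 p.2 /\ dist p.1 p.2 = m.
    rewrite /m; elim/big_ind: _.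
    - by left.
    - move=> x y hx hy; rewrite /minn; case: ifP => _; [case: hx|case: hy] => h;
        by [left | right].
    - by move=> p hp; right; exists p.
  case=> [->|[p [hp e]]]; first by rewrite eqxx.
  by apply/orP; right; apply/existsP; exists p; rewrite hp e eqxx.
case/orP.
  move=> /eqP e; exfalso.
  have : \big[minn/n]_(p | nonedge E p.1 p.2) dist p.1 p.2 <= dist u0 v0.
    exact: (@bigmin_le _ _ (fun p : _ * _ => nonedge E p.1 p.2) (fun p => dist p.1 p.2) n (u0,v0) (mem_index_enum _) h0).
  by rewrite e leqNgt dist_lt.
by case/existsP => [[u v]] /andP[h /eqP e]; exists u, v.
Qed.

Lemma alpha_some u v : nonedge E u v -> exists a : nat, alphaG E = Some a.
Proof.
move=> h; rewrite /alphaG; case: ifP; first by eexists.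
move=> hf; suff : false by []; rewrite -hf; apply/existsP; by exists (u, v).
Qed.

End AB.

Set Implicit Arguments. Unset Strict Implicit. Unset Printing Implicit Defensive.

Lemma card_swap (K : finType) (A B : {set K}) : #|B| + #|A :\: B| = #|A| + #|B :\: A|.
Proof.
have h1 := cardsID A B; have h2 := cardsID B A; rewrite setIC in h2; lia.
Qed.

Definition Tset n (E : rel 'I_n) := [set t : 'I_n * 'I_n * 'I_n |
      [&& t.1.1 != t.1.2, t.1.2 != t.2, t.1.1 != t.2,
          E t.1.1 t.1.2, E t.1.2 t.2, ~~ E t.1.1 t.2 & ~~ E t.2 t.1.1]].

Lemma P3E n (E : rel 'I_n) : P3 E = #|Tset E|.
Proof. by []. Qed.

Section A.
Variable n : nat.
Variable E : rel 'I_n.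
Hypothesis hE : cid2 E.
Variables u v : 'I_n.
Hypothesis huv : E u v.
Hypothesis hb : dist u v = betaG E.

Definition Erem : rel 'I_n := fun a b => E a b && ~~ ((a == u) && (b == v)).

Lemma Erem_cid2 : cid2 Erem.
Proof.
case: hE => hl h2 hi; split.
- by move=> a; rewrite /Erem negb_and hl.
- move=> a b nab; rewrite /Erem; apply/negP => /andP[/andP[h _] /andP[h' _]].
  by move: (h2 _ _ nab); rewrite h h'.
- move=> a b c habc; rewrite /Erem => /andP[hac _].
  have /andP[hab hbc] := hi _ _ _ habc hac; rewrite hab hbc /=.
  move: habc; rewrite /cw => /and4P[nab nbc nac hd].
  have hac' := beta_ge hac.
  apply/andP; split; apply/negP => /andP[/eqP ea /eqP eb]; subst.
  + by move: hd; rewrite hb; lia.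
  + dt a u v; dl a u; have := dist_pos nab; lia.
Qed.


Lemma Erem_P3 :
  P3 E + (betaG E).-1 + #|OUT E v :&: IN E u| <=
  P3 Erem + #|OUT E v :\: IN E u| + #|IN E u :\: OUT E v|.
Proof.
rewrite !P3E.
set T := Tset E; set T' := Tset Erem.
have hs := card_swap T T'.
set S1 := [set w | 0 < dist u w <= (betaG E).-1].
set W := OUT E v :&: IN E u.
have nuv := edge_neq hE huv.
have evu : E v u = false by apply/negbTE/(edge_asym hE huv).
have hbn := beta_lt E u.
have G : ((fun w => (u,w,v)) @: S1) :|: ((fun w => (v,w,u)) @: W) \subset T' :\: T.
  apply/subsetP => t /setUP [] /imsetP [w hw ->].
    move: hw; rewrite inE => hw.
    have /andP[h1 h2] : E u w && E w v by apply: (intv_out hE huv); lia.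
    have n1 := edge_neq hE h1; have n2 := edge_neq hE h2.
    rewrite !inE /= /Erem h1 h2 huv evu eqxx (negbTE n1) (negbTE n2) (negbTE nuv) /=.
    by rewrite eq_sym (negbTE n1) eqxx.
  move: hw; rewrite !inE => /andP[h1 h2].
  have n1 := edge_neq hE h1; have n2 := edge_neq hE h2.
  rewrite ?inE /= /Erem h1 h2 huv evu eqxx (negbTE n1) (negbTE n2) eq_sym (negbTE nuv) /=.
  by rewrite eqxx.
have L : T :\: T' \subset ((fun c => (u,v,c)) @: (OUT E v :\: IN E u)) :|:
                             ((fun a => (a,u,v)) @: (IN E u :\: OUT E v)).
  apply/subsetP => [[[a b] c]]; rewrite !inE /= /Erem.
  case/andP => /negP hn /and5P[nab nbc nac hab /and3P[hbc hac hca]].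
  case: (boolP ((a == u) && (b == v))) => [/andP[/eqP ea /eqP eb]|h1].
    subst; apply/orP; left; apply/imsetP; exists c => //.
    by rewrite !inE hbc /= hca.
  case: (boolP ((b == u) && (c == v))) => [/andP[/eqP ea /eqP eb]|h2].
    subst; apply/orP; right; apply/imsetP; exists a => //.
    by rewrite !inE hab /= hca.
  exfalso; apply: hn.
  rewrite nab nbc nac hab hbc h1 h2 /=.
  by rewrite (negbTE hac) (negbTE hca).
have cS1 : #|S1| = (betaG E).-1.
  rewrite /S1 (card_coord_range 0 (@dist_injl n u) (dist_lt u)); lia.
have disj : ((fun w => (u,w,v)) @: S1) :&: ((fun w => (v,w,u)) @: W) = set0.
  apply/setP => t; rewrite !inE; apply/negP => /andP[/imsetP[w _ ->] /imsetP[w' _ [e _ _]]].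
  by move: nuv; rewrite e eqxx.
have cG : #|((fun w => (u,w,v)) @: S1) :|: ((fun w => (v,w,u)) @: W)| = #|S1| + #|W|.
  rewrite cardsU disj cards0 subn0.
  rewrite !card_imset //.
    by move=> x y [].
  by move=> x y [].
have cL : #|((fun c => (u,v,c)) @: (OUT E v :\: IN E u)) :|:
            ((fun a => (a,u,v)) @: (IN E u :\: OUT E v))| <=
          #|OUT E v :\: IN E u| + #|IN E u :\: OUT E v|.
  apply: leq_trans (leq_card_setU _ _) _.
  rewrite !card_imset //; first by move=> x y [].
  by move=> x y [].
have := subset_leq_card G; have := subset_leq_card L.
lia.
Qed.


Lemma nuv0 : u != v. Proof. have := @edge_neq n E hE u v huv. by []. Qed.

Lemma Erem_xi : (exists p q, nonedge E p q /\ dist p q < betaG E) ->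
  2 * betaG E <= n -> xi Erem < xi E.
Proof.
move=> [p [q [hpq hd]]] h2.
apply: proper_card; apply/properP; split.
  apply/subsetP => [[[a b] [c d]]]; rewrite !inE /= /Erem /nonedge.
  case/and3P => /andP[hab _] /and3P[ncd h1 h2'] hlt.
  rewrite hab /=.
  have hab' := beta_ge hab.
  case: (boolP (E c d)) h1 => hcd.
    rewrite /= negbK => /andP[/eqP ec /eqP ed]; subst.
    by move: hlt; rewrite hb; lia.
  case: (boolP (E d c)) h2' => hdc //=.
  rewrite negbK => /andP[/eqP ed /eqP ec]; subst.
  have := dist_sym nuv0; lia.
by rewrite ncd hlt.
exists ((u, v), (p, q)).
  by rewrite !inE /= huv hpq hb hd.
by rewrite !inE /= /Erem !eqxx /= andbF.
Qed.

End A.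

Set Implicit Arguments. Unset Strict Implicit. Unset Printing Implicit Defensive.

Section B.
Variable n : nat.
Variable E : rel 'I_n.
Hypothesis hE : cid2 E.
Variables u v : 'I_n.
Hypothesis hne : nonedge E u v.
Hypothesis hmin : forall p q, nonedge E p q -> dist u v <= dist p q.

Lemma nuvB : u != v. Proof. by case/and3P: hne. Qed.
Lemma nEuv : E u v = false. Proof. by case/and3P: hne => _ /negbTE. Qed.
Lemma nEvu : E v u = false. Proof. by case/and3P: hne => _ _ /negbTE. Qed.

Lemma adj_near a b : a != b -> dist a b < dist u v -> E a b || E b a.
Proof.
move=> nab hd; case: (boolP (E a b)) => //= hab; case: (boolP (E b a)) => //= hba.
have : nonedge E a b by rewrite /nonedge nab hab hba.
move/hmin; lia.
Qed.

Lemma between c : 0 < dist u c < dist u v -> E u c && E c v.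
Proof.
move=> /andP[h1 h2].
have nuc : u != c by rewrite -dist0 -lt0n.
have ncv : c != v by apply: contraTneq h2 => ->; rewrite ltnn.
have sv := dist_sym nuvB; have sc := dist_sym nuc.
have hcv : E c v.
  dt u c v; dl c v.
  have /orP[//|hvc] := adj_near ncv (ltac:(lia)).
  have := @intv_out n E hE v u c hvc; rewrite nEvu andFb => H.
  suff : false by []; apply: H.
  dt v u c; dl u v; dl u c; have := dist_pos (edge_neq hE hvc); dl v c; lia.
rewrite hcv andbT.
have /orP[//|hcu] := adj_near nuc (ltac:(lia)).
have := @intv_out n E hE c v u hcu; rewrite nEvu andbF => H.
suff : false by []; apply: H.
dt u c v; dt c v u; dl c u; dl c v; dl u v; dl u c; have := dist_pos ncv; lia.
Qed.

Lemma short_edge c : E u c -> dist u c < dist u v.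
Proof.
move=> huc; case: (ltngtP (dist u c) (dist u v)) => // h.
  have := @intv_out n E hE u v c huc; rewrite nEuv /= => H.
  suff : false by []; apply: H; by rewrite (dist_pos nuvB) h.
move/dist_injl: h => e; by move: huc; rewrite e nEuv.
Qed.

Definition Eadd : rel 'I_n := fun a b => E a b || ((a == u) && (b == v)).

Lemma Eadd_cid2 : cid2 Eadd.
Proof.
case: hE => hl h2 hi; split.
- by move=> a; rewrite /Eadd negb_or hl /=; apply/negP => /andP[/eqP -> /eqP e];
    move: nuvB; rewrite e eqxx.
- move=> a b nab; rewrite /Eadd; apply/negP => /andP[/orP[h|/andP[/eqP ea /eqP eb]]
      /orP[h'|/andP[/eqP ea' /eqP eb']]].
  + by move: (h2 _ _ nab); rewrite h h'.
  + by move: h; rewrite ea' eb' nEvu.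
  + by move: h'; rewrite ea eb nEvu.
  + by move: nuvB; rewrite -ea eb' eqxx.
- move=> a b c habc; rewrite /Eadd => /orP[hac|/andP[/eqP ea /eqP ec]].
    by have /andP[-> ->] := hi _ _ _ habc hac.
  subst; move: habc; rewrite /cw => /and4P[nab nbc nac hd].
  have /andP[-> ->] // := between (introT andP (conj (dist_pos nab) hd)).
Qed.

Lemma Eadd_P3 :
  P3 E + #|OUT E v :\: IN E u| + #|IN E u :\: OUT E v| <=
  P3 Eadd + (dist u v).-1 + #|OUT E v :&: IN E u|.
Proof.
rewrite !P3E.
set T := Tset E; set T' := Tset Eadd.
have hs := card_swap T T'.
set S1 := [set w | 0 < dist u w <= (dist u v).-1].
set W := OUT E v :&: IN E u.
have nuv := nuvB.
have G : ((fun c => (u,v,c)) @: (OUT E v :\: IN E u)) :|: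
         ((fun a => (a,u,v)) @: (IN E u :\: OUT E v)) \subset T' :\: T.
  apply/subsetP => t /setUP [] /imsetP [c hc ->]; move: hc; rewrite !inE => /andP[h1 h2].
    have nvc := edge_neq hE h2.
    have nuc : u != c by apply: contraTneq h2 => <-; rewrite nEvu.
    have euc : E u c = false.
      apply/negP => h; have := in_adj hE h h2 nuv; by rewrite nEuv nEvu.
    rewrite /Eadd /= ?nEuv ?h2 ?euc ?(negbTE h1) ?nuv ?nvc ?nuc ?eqxx /=.
    by rewrite (eq_sym c v) nvc (negbTE nuv) andbF.
  have nau := edge_neq hE h2.
  have nav : c != v by apply: contraTneq h2 => ->; rewrite nEvu.
  have eav : E c v = false.
    apply/negP => h; have := out_adj hE h2 h nuv; by rewrite nEuv nEvu.
  rewrite /Eadd /= ?nEuv ?h2 ?eav ?(negbTE h1) ?nuv ?nav ?nau ?eqxx /=.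
  by rewrite (negbTE nau) (eq_sym v u) (negbTE nuv).
have L : T :\: T' \subset ((fun w => (u,w,v)) @: S1) :|: ((fun w => (v,w,u)) @: W).
  apply/subsetP => [[[a b] c]]; rewrite !inE /= /Eadd.
  case/andP => /negP hn /and5P[nab nbc nac hab /and3P[hbc hac hca]].
  case: (boolP ((a == u) && (c == v))) => [/andP[/eqP ea /eqP eb]|h1].
    subst; apply/orP; left; apply/imsetP; exists b => //.
    by rewrite !inE (dist_pos nab) /=; have := short_edge hab; lia.
  case: (boolP ((c == u) && (a == v))) => [/andP[/eqP ea /eqP eb]|h2].
    subst; apply/orP; right; apply/imsetP; exists b => //.
    by rewrite !inE hab hbc.
  exfalso; apply: hn.
  by rewrite nab nbc nac hab hbc (negbTE h1) (negbTE h2) (negbTE hac) (negbTE hca).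
have hvn : dist u v < n := dist_lt u v.
have cS1 : #|S1| = (dist u v).-1.
  rewrite /S1 (card_coord_range 0 (@dist_injl n u) (dist_lt u)); lia.
have disj : ((fun c => (u,v,c)) @: (OUT E v :\: IN E u)) :&:
         ((fun a => (a,u,v)) @: (IN E u :\: OUT E v)) = set0.
  apply/setP => t; rewrite !inE; apply/negP => /andP[/imsetP[w _ ->] /imsetP[w' _ [_ e _]]].
  by move: nuv; rewrite e eqxx.
have cG : #|((fun c => (u,v,c)) @: (OUT E v :\: IN E u)) :|:
         ((fun a => (a,u,v)) @: (IN E u :\: OUT E v))| =
         #|OUT E v :\: IN E u| + #|IN E u :\: OUT E v|.
  rewrite cardsU disj cards0 subn0.
  rewrite !card_imset //.
    by move=> x y [].
  by move=> x y [].
have cL : #|((fun w => (u,w,v)) @: S1) :|: ((fun w => (v,w,u)) @: W)| <= #|S1| + #|W|.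
  apply: leq_trans (leq_card_setU _ _) _.
  rewrite !card_imset //; first by move=> x y [].
  by move=> x y [].
have := subset_leq_card G; have := subset_leq_card L.
lia.
Qed.

Lemma Eadd_xi : (exists p q, E p q /\ dist u v < dist p q) -> xi Eadd < xi E.
Proof.
move=> [p [q [hpq hd]]].
apply: proper_card; apply/properP; split.
  apply/subsetP => [[[a b] [c d]]]; rewrite !inE /= /Eadd /nonedge.
  case/and3P => hab /and3P[ncd h1 h2'] hlt.
  rewrite negb_or in h1; rewrite negb_or in h2'.
  case/andP: h1 => h1 _; case/andP: h2' => h2' _.
  rewrite ncd h1 h2' hlt /= andbT.
  case/orP: hab => // /andP[/eqP ea /eqP eb]; subst.
  have : nonedge E c d by rewrite /nonedge ncd h1 h2'.
  move/hmin; lia.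
exists ((p, q), (u, v)).
  by rewrite !inE /= hpq hne hd.
by rewrite !inE /= /Eadd /nonedge !eqxx /= !orbT /= !andbF.
Qed.

End B.

Set Implicit Arguments. Unset Strict Implicit. Unset Printing Implicit Defensive.

Section Gen.
Variable n : nat.
Variable E : rel 'I_n.
Hypothesis hE : cid2 E.
Implicit Types u v w a b c : 'I_n.

Lemma card_out_le v k : k < n -> (forall c, E v c -> dist v c <= k) -> #|OUT E v| <= k.
Proof.
move=> hk h.
have : OUT E v \subset [set c | 0 < dist v c <= k].
  apply/subsetP => c; rewrite !inE => hc; rewrite (dist_pos (edge_neq hE hc)); exact: h.
move/subset_leq_card; rewrite (card_coord_range 0 (@dist_injl n v) (dist_lt v)) //; lia.
Qed.

Lemma card_in_le u k : k < n -> (forall c, E c u -> dist c u <= k) -> #|IN E u| <= k.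
Proof.
move=> hk h.
have : IN E u \subset [set c | 0 < dist c u <= k].
  apply/subsetP => c; rewrite !inE => hc; rewrite (dist_pos (edge_neq hE hc)); exact: h.
move/subset_leq_card; rewrite (card_coord_range 0 (@dist_injr n u) (fun c => dist_lt c u)) //; lia.
Qed.

Variables u v : 'I_n.
Hypothesis nuv : u != v.
Hypothesis evu : E v u = false.

Definition carc := [set c | 0 < dist v c < dist v u].

Lemma out_arc : OUT E v \subset carc.
Proof.
apply/subsetP => c; rewrite !inE => hc.
rewrite (dist_pos (edge_neq hE hc)) /=.
case: (ltngtP (dist v c) (dist v u)) => // h.
  have := @intv_out n E hE v u c hc; rewrite evu /= => H.
  suff : false by []; apply: H; rewrite h andbT; apply: dist_pos; by rewrite eq_sym.
by move/dist_injl: h => e; move: hc; rewrite e evu.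
Qed.

Lemma in_arc : IN E u \subset carc.
Proof.
apply/subsetP => c; rewrite !inE => hc.
have ncv : c != v by apply: contraTneq hc => ->; rewrite evu.
rewrite (dist_pos (negbT (introF eqP (fun e => (elimT negP ncv) (introT eqP (esym e)))))) /=.
case: (ltngtP (dist v c) (dist v u)) => // h.
  have := @intv_out n E hE c v u hc; rewrite evu andbF => H.
  suff : false by []; apply: H.
  have nuc : u != c by apply: contraTneq h => ->; rewrite ltnn.
  dt v u c; dt c v u; dl c u; dl v c; dl c v; dl v u; have := dist_pos ncv;
  have := dist_pos nuc; have := dist_pos nuv; have := dist_sym nuc; have := dist_sym ncv; have := dist_sym nuv; dl u v; lia.
move/dist_injl: h => e; move: hc; rewrite e; case: hE => hl _ _.
by rewrite (negbTE (hl u)).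
Qed.

Lemma card_arc : #|carc| = (dist v u).-1.
Proof.
have := dist_lt v u; have := dist_pos (negbT (introF eqP (fun e => (elimT negP nuv) (introT eqP (esym e))))).
move=> h1 h2.
have -> : carc = [set c | 0 < dist v c <= (dist v u).-1] by apply/setP => c; rewrite !inE; lia.
rewrite (card_coord_range 0 (@dist_injl n v) (dist_lt v)); lia.
Qed.

Lemma pos_out : #|OUT E v|.+1 < dist v u ->
  exists c, [/\ dist v c = #|OUT E v|.+1, ~~ E v c & c != v].
Proof.
move=> h; have hl := dist_lt v u.
have [c hc] := coord_onto (@dist_injl n v) (dist_lt v) (ltn_trans h hl).
exists c; split => //.
  have := out_char hE v; move/setP/(_ c); rewrite !inE hc => ->; apply/negP; lia.
by rewrite eq_sym -dist0 hc.
Qed.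

Lemma pos_in : #|IN E u|.+1 < dist v u ->
  exists c, [/\ dist c u = #|IN E u|.+1, ~~ E c u & c != u].
Proof.
move=> h; have hl := dist_lt v u.
have [c hc] := coord_onto (@dist_injr n u) (fun c => dist_lt c u) (ltn_trans h hl).
exists c; split => //.
  have := in_char hE u; move/setP/(_ c); rewrite !inE hc => ->; apply/negP; lia.
by rewrite -dist0 hc.
Qed.

End Gen.

Set Implicit Arguments. Unset Strict Implicit. Unset Printing Implicit Defensive.

Section Cyc.
Variable n : nat.
Hypothesis hn : 4 <= n.
Implicit Types u v w a b c : 'I_n.

Lemma n_pos : 0 < n. Proof. lia. Qed.

Definition succ (a : 'I_n) : 'I_n := Ordinal (ltn_pmod a.+1 n_pos).

Lemma dist_succ a : dist a (succ a) = 1.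
Proof.
rewrite distE /succ /=; have := ltn_ord a.
case: (ltngtP a.+1 n) => h1 h2.
- by rewrite modn_small //; case: leqP; lia.
- lia.
- by rewrite h1 modnn; case: leqP; lia.
Qed.

Lemma succ_uniq a b : dist a b = 1 -> b = succ a.
Proof. by rewrite -(dist_succ a) => /dist_injl. Qed.

Definition Ecyc : rel 'I_n := fun a b => dist a b == 1.

Lemma cyc_cid2 : cid2 Ecyc.
Proof.
split.
- by move=> a; rewrite /Ecyc dist_uu.
- move=> a b nab; rewrite /Ecyc; apply/negP => /andP[/eqP h1 /eqP h2].
  have := dist_sym nab; lia.
- move=> a b c; rewrite /cw /Ecyc => /and4P[nab _ _ h] /eqP e.
  have := dist_pos nab; lia.
Qed.

Lemma cyc_P3 : n <= P3 Ecyc.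
Proof.
rewrite P3E.
pose f a := (a, succ a, succ (succ a)).
have fi : injective f by move=> x y [].
have hc : #|f @: [set: 'I_n]| = n by rewrite card_imset // cardsT card_ord.
apply: (leq_trans (eq_leq (esym hc))).
apply: subset_leq_card; apply/subsetP => t /imsetP [a _ ->].
have d1 := dist_succ a; have d2 := dist_succ (succ a).
have n1 : a != succ a by rewrite -dist0 d1.
have n2 : succ a != succ (succ a) by rewrite -dist0 d2.
have d3 : dist a (succ (succ a)) = 2.
  dt a (succ a) (succ (succ a)); dl a (succ (succ a)); lia.
have n3 : a != succ (succ a) by rewrite -dist0 d3.
have d4 := dist_sym n3.
rewrite inE /= /Ecyc n1 n2 n3 d1 d2 d3 /=.
apply/eqP; lia.
Qed.

Lemma degen_P3 (E : rel 'I_n) u v : cid2 E -> betaG E <= 1 -> nonedge E u v -> dist u v = 1 ->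
  P3 E <= n - 2.
Proof.
move=> hE hb hne huv.
have h1n : 1 < n by lia.
have [p hp] := coord_onto (@dist_injr n u) (fun c => dist_lt c u) h1n.
have np : p != u by rewrite -dist0 hp.
have hvs : v = succ u := succ_uniq huv.
have hus : u = succ p := succ_uniq hp.
rewrite P3E.
pose f a := (a, succ a, succ (succ a)).
have fi : injective f by move=> x y [].
have : Tset E \subset f @: (~: [set u; p]).
  apply/subsetP => [[[a b] c]]; rewrite inE /= => /and5P[nab nbc nac hab /and3P[hbc _ _]].
  have e1 : dist a b = 1 by have := dist_pos nab; have := beta_ge hab; lia.
  have e2 : dist b c = 1 by have := dist_pos nbc; have := beta_ge hbc; lia.
  have eb := succ_uniq e1; have ec := succ_uniq e2; subst b c.
  apply/imsetP; exists a => //.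
  rewrite !inE negb_or; apply/andP; split; apply/negP => /eqP ea; subst a.
    by move: hab hne; rewrite -hvs /nonedge => ->; rewrite andbF.
  by move: hbc hne; rewrite -hus -hvs /nonedge => ->; rewrite andbF.
move/subset_leq_card; rewrite card_imset //.
have := cardsC [set u; p]; rewrite cards2 (eq_sym u p) np card_ord /=.
lia.
Qed.

End Cyc.

Set Implicit Arguments. Unset Strict Implicit. Unset Printing Implicit Defensive.

Section Main.
Variable n : nat.
Hypothesis hn : 4 <= n.
Variable E : rel 'I_n.
Hypothesis hopt : optimal E.

Lemma hE : cid2 E. Proof. by case: hopt. Qed.
Lemma hmax : forall E' : rel 'I_n, cid2 E' -> P3 E' <= P3 E.
Proof. by case: hopt. Qed.
Lemma hxi : forall E' : rel 'I_n, cid2 E' -> P3 E' = P3 E -> xi E <= xi E'.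
Proof. by case: hopt. Qed.

Lemma P3_ge : n <= P3 E.
Proof. exact: leq_trans (cyc_P3 hn) (hmax (cyc_cid2 hn)). Qed.

Lemma some_triple : exists a b c, [/\ E a b, E b c & nonedge E a c].
Proof.
have : 0 < #|Tset E| by rewrite -P3E; have := P3_ge; lia.
case/card_gt0P => [[[a b] c]]; rewrite inE /= => /and5P[nab nbc nac hab /and3P[hbc hac hca]].
by exists a, b, c; split => //; rewrite /nonedge nac hac hca.
Qed.

Lemma strict_of (E' : rel 'I_n) : cid2 E' -> xi E' < xi E -> P3 E' < P3 E.
Proof.
move=> h hx; have := hmax h; rewrite leq_eqVlt => /orP[/eqP e|//].
by have := hxi h e; lia.
Qed.

Variable al : nat.
Hypothesis hal : alphaG E = Some al.

Lemma amin u v : nonedge E u v -> al <= dist u v.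
Proof. by have [h _] := alpha_spec hal; exact: h. Qed.

Lemma aex : exists u v, nonedge E u v /\ dist u v = al.
Proof. by have [_ h] := alpha_spec hal. Qed.

Lemma a_pos : 0 < al.
Proof.
have [u [v [h <-]]] := aex; apply: dist_pos; by case/and3P: h.
Qed.

Lemma a_half : 2 * al <= n.
Proof.
have [u [v [h e]]] := aex.
have h' : nonedge E v u by rewrite nonedge_sym.
have nuv : u != v by case/and3P: h.
have := amin h'; have := dist_sym nuv; lia.
Qed.

Lemma longest : exists u v, E u v /\ dist u v = betaG E.
Proof. have [a [b [c [hab _ _]]]] := some_triple; exact: beta_att hab. Qed.

Lemma no_degen : al = 1 -> betaG E <= 1 -> False.
Proof.
move=> e hb; have [u [v [h d]]] := aex.
have := degen_P3 hn hE hb h (etrans d e); have := P3_ge; lia.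
Qed.

Section BS.
Variables u v : 'I_n.
Hypothesis hne : nonedge E u v.
Hypothesis hd : dist u v = al.

Let nuv : u != v. Proof. by case/and3P: hne. Qed.
Let evu : E v u = false. Proof. by case/and3P: hne => _ _ /negbTE. Qed.
Let euv : E u v = false. Proof. by case/and3P: hne => _ /negbTE. Qed.
Let hmin p q : nonedge E p q -> dist u v <= dist p q.
Proof. rewrite hd; exact: amin. Qed.
Let dvu : dist v u = n - al. Proof. have := dist_sym nuv; lia. Qed.

Lemma B_P3 :
  #|OUT E v| + #|IN E u| + (al < betaG E) <= al.-1 + 3 * #|OUT E v :&: IN E u|.
Proof.
have h1 := Eadd_P3 hE hne.
have h2 := hmax (Eadd_cid2 hE hne hmin).
have h3 : al < betaG E -> P3 (Eadd E u v) < P3 E.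
  move=> hlt; apply: strict_of (Eadd_cid2 hE hne hmin) _.
  apply: Eadd_xi hne hmin _.
  have [p [q [hpq e]]] := longest; exists p, q; split => //; lia.
have c1 := cardsD (OUT E v) (IN E u).
have c2 := cardsD (IN E u) (OUT E v).
rewrite setIC in c2.
have w1 := subset_leq_card (subsetIl (OUT E v) (IN E u)).
have w2 := subset_leq_card (subsetIr (OUT E v) (IN E u)).
rewrite hd in h1.
case: (ltnP al (betaG E)) => hl.
  have := h3 hl; lia.
lia.
Qed.

Lemma B_arc : #|OUT E v| <= n - al - 1 /\ #|IN E u| <= n - al - 1.
Proof.
have := card_arc nuv evu; rewrite dvu => ca.
split.
  have := subset_leq_card (out_arc hE nuv evu); lia.
have := subset_leq_card (in_arc hE nuv evu); lia.
Qed.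

Lemma B_posx : al <= #|OUT E v|.+1.
Proof.
case: (ltnP #|OUT E v|.+1 (dist v u)) => h; last by have := a_half; lia.
have [c [dc nvc ncv]] := pos_out hE nuv evu h.
suff : nonedge E v c by move/amin; lia.
rewrite /nonedge (eq_sym v c) ncv nvc /=.
apply/negP => hcv.
have ncu : c != u by apply/negP => /eqP e; move: h; rewrite -dc e ltnn.
have := @intv_out n E hE c u v hcv; rewrite euv andbF => H.
suff : false by []; apply: H.
have hdc := dist_sym ncv; have hdu := dist_sym ncu.
dt v c u; dl v c; dl c u; dl v u; have := dist_pos ncu; lia.
Qed.

Lemma B_posy : al <= #|IN E u|.+1.
Proof.
case: (ltnP #|IN E u|.+1 (dist v u)) => h; last by have := a_half; lia.
have [c [dc ncu ncu']] := pos_in hE nuv evu h.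
suff : nonedge E c u by move/amin; lia.
rewrite /nonedge ncu' ncu /=.
apply/negP => huc.
have := @intv_out n E hE u v c huc; rewrite euv /= => H.
suff : false by []; apply: H.
have hdu := dist_sym ncu'.
rewrite (dist_pos nuv) /=; lia.
Qed.

Lemma B_overlap0 : #|OUT E v| + #|IN E u| <= n - al - 1 -> #|OUT E v :&: IN E u| = 0.
Proof.
move=> h; apply/eqP; rewrite cards_eq0; apply/eqP/setP => c; rewrite !inE.
apply/negP => /andP[h1 h2].
have a1 : c \in carc u v by apply: (subsetP (out_arc hE nuv evu)); rewrite inE.
move: a1; rewrite inE => a1.
have h1' : c \in OUT E v by rewrite inE.
have h2' : c \in IN E u by rewrite inE.
rewrite (out_char hE v) inE in h1'; rewrite (in_char hE u) inE in h2'.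
dt v c u; lia.
Qed.

Lemma B_overlap1 : n - al <= #|OUT E v| + #|IN E u| ->
  n - al - 1 <= #|OUT E v| + #|IN E u| - #|OUT E v :&: IN E u|.
Proof.
move=> h.
have := card_arc nuv evu; rewrite dvu => ca.
have : carc u v \subset OUT E v :|: IN E u.
  apply/subsetP => c; rewrite inE => hc.
  rewrite (out_char hE v) (in_char hE u) !inE.
  have ncu : c != u by apply: contraTneq hc => ->; rewrite ltnn andbF.
  have := dist_pos ncu.
  dt v c u; lia.
move/subset_leq_card; rewrite cardsU; lia.
Qed.

Lemma B_bound kx ky : kx < n -> ky < n ->
  (forall c, E v c -> dist v c <= kx) -> (forall c, E c u -> dist c u <= ky) ->
  3 * n + (al < betaG E) <= 4 * al + 2 + 2 * (kx + ky).
Proof.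
move=> kxn kyn hx hy.
have bx := card_out_le hE kxn hx; have by_ := card_in_le hE kyn hy.
have hP := B_P3; have [a1 a2] := B_arc; have px := B_posx; have py := B_posy.
have ha := a_half; have hpos := a_pos.
have w1 := subset_leq_card (subsetIl (OUT E v) (IN E u)).
have w2 := subset_leq_card (subsetIr (OUT E v) (IN E u)).
case: (leqP (#|OUT E v| + #|IN E u|) (n - al - 1)) => hs.
  have w0 := B_overlap0 hs.
  exfalso; apply: no_degen.
    case: (ltnP al (betaG E)) hP => hl; lia.
  case: (ltnP al (betaG E)) hP => hl; lia.
have := B_overlap1 (ltac:(lia)); lia.
Qed.

End BS.

Section AS.
Variables u v : 'I_n.
Hypothesis huv : E u v.
Hypothesis hb : dist u v = betaG E.

Let nuv : u != v. Proof. by have := @edge_neq n E hE u v huv. Qed.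
Let evu : E v u = false. Proof. exact/negbTE/(edge_asym hE huv). Qed.
Let dvu : dist v u = n - betaG E. Proof. have := dist_sym nuv; lia. Qed.

Lemma A_P3 : (betaG E).-1 + 3 * #|OUT E v :&: IN E u| <= #|OUT E v| + #|IN E u|.
Proof.
have h1 := Erem_P3 hE huv hb.
have h2 := hmax (Erem_cid2 hE huv hb).
have c1 := cardsD (OUT E v) (IN E u).
have c2 := cardsD (IN E u) (OUT E v).
rewrite setIC in c2.
have w1 := subset_leq_card (subsetIl (OUT E v) (IN E u)).
have w2 := subset_leq_card (subsetIr (OUT E v) (IN E u)).
lia.
Qed.

Lemma A_P3s : 2 * betaG E <= n -> al < betaG E ->
  (betaG E).-1 + 3 * #|OUT E v :&: IN E u| < #|OUT E v| + #|IN E u|.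
Proof.
move=> h2b hl.
have h1 := Erem_P3 hE huv hb.
have h2 : P3 (Erem E u v) < P3 E.
  apply: strict_of (Erem_cid2 hE huv hb) _.
  apply: (Erem_xi hE huv hb) => //.
  have [p [q [h e]]] := aex; exists p; exists q; split; [exact: h | rewrite e; exact: hl].
have c1 := cardsD (OUT E v) (IN E u).
have c2 := cardsD (IN E u) (OUT E v).
rewrite setIC in c2.
have w1 := subset_leq_card (subsetIl (OUT E v) (IN E u)).
have w2 := subset_leq_card (subsetIr (OUT E v) (IN E u)).
lia.
Qed.

Lemma A_arc : #|OUT E v| + #|IN E u| - #|OUT E v :&: IN E u| <= n - betaG E - 1.
Proof.
have := card_arc nuv evu; rewrite dvu => ca.
have : OUT E v :|: IN E u \subset carc u v.
  by rewrite subUset (out_arc hE nuv evu) (in_arc hE nuv evu).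
move/subset_leq_card; rewrite cardsU; lia.
Qed.

Lemma A_posx : #|OUT E v| = n - betaG E - 1 \/
  exists c, nonedge E v c /\ dist v c = #|OUT E v|.+1.
Proof.
have := card_arc nuv evu; rewrite dvu => ca.
have := subset_leq_card (out_arc hE nuv evu) => hx.
case: (ltnP #|OUT E v|.+1 (dist v u)) => h; last by left; lia.
right; have [c [dc nvc ncv]] := pos_out hE nuv evu h.
exists c; split => //.
rewrite /nonedge (eq_sym v c) ncv nvc /=.
apply/negP => hcv; have := beta_ge hcv; have := dist_sym ncv; lia.
Qed.

Lemma A_posy : #|IN E u| = n - betaG E - 1 \/
  exists c, nonedge E c u /\ dist c u = #|IN E u|.+1.
Proof.
have := card_arc nuv evu; rewrite dvu => ca.
have := subset_leq_card (in_arc hE nuv evu) => hx.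
case: (ltnP #|IN E u|.+1 (dist v u)) => h; last by left; lia.
right; have [c [dc ncu ncu']] := pos_in hE nuv evu h.
exists c; split => //.
rewrite /nonedge ncu' ncu /=.
apply/negP => huc; have := beta_ge huc; have := dist_sym ncu'; lia.
Qed.

Lemma A_bound (iv iu : bool) :
  (iv -> forall c, nonedge E v c -> dist v c != al) ->
  (iu -> forall c, nonedge E c u -> dist c u != al) ->
  4 * (al + betaG E) + (al < betaG E) + 2 * (iv || iu) <= 3 * n + 2.
Proof.
move=> hiv hiu.
have hP := A_P3; have hPs := A_P3s; have ha := A_arc.
have w1 := subset_leq_card (subsetIl (OUT E v) (IN E u)).
have w2 := subset_leq_card (subsetIr (OUT E v) (IN E u)).
have hpos := a_pos; have hhalf := a_half.
have bpos : 0 < betaG E by rewrite -hb; exact: dist_pos nuv.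
have px : #|OUT E v| = n - betaG E - 1 \/ (al <= #|OUT E v| + ~~ iv).
  case: A_posx => [|[c [hc dc0]]]; first by left.
  have dc : dist v c = #|OUT E v|.+1 := dc0.
  right; case: iv hiv => hiv /=.
    have := hiv isT c hc; rewrite dc neq_ltn => hneq; have := amin hc; rewrite dc.
    set x := #|OUT E v| in hneq *; lia.
  by have := amin hc; rewrite dc addn1.
have py : #|IN E u| = n - betaG E - 1 \/ (al <= #|IN E u| + ~~ iu).
  case: A_posy => [|[c [hc dc0]]]; first by left.
  have dc : dist c u = #|IN E u|.+1 := dc0.
  right; case: iu hiu => hiu /=.
    have := hiu isT c hc; rewrite dc neq_ltn => hneq; have := amin hc; rewrite dc.
    set x := #|IN E u| in hneq *; lia.
  by have := amin hc; rewrite dc addn1.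
have h2b : 2 * betaG E <= n by lia.
case: (ltnP al (betaG E)) => hl.
  have hs := hPs h2b hl.
  set x := #|OUT E v| in hP hs ha w1 w2 px py *; set y := #|IN E u| in hP hs ha w1 w2 px py *.
  set w := #|_ :&: _| in hP hs ha w1 w2 px py *; lia.
set x := #|OUT E v| in hP ha w1 w2 px py *; set y := #|IN E u| in hP ha w1 w2 px py *.
set w := #|_ :&: _| in hP ha w1 w2 px py *; lia.
Qed.

End AS.

End Main.

Unset Implicit Arguments. Set Strict Implicit. Set Printing Implicit Defensive.
Import Order.TTheory GRing.Theory Num.Theory.

Local Open Scope ring_scope.

Lemma rat_lt {p q : nat} : (p < q)%N -> (p%:R : rat) < q%:R.
Proof. by rewrite ltr_nat. Qed.

Theorem mainTheorem8 (n : nat) (E : rel 'I_n) :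
  (4 <= n)%N -> optimal E ->
  exists a : nat, alphaG E = Some a /\
    let s : rat := (a + betaG E)%:R in
    let e : rat := (epsG E)%:R in
    [/\ (3 * n)%:R / 4 - 1 / 2 - e / 4 < s,
        s < (3 * n)%:R / 4 + 1 / 2 + e / 4,
        (exists x, on_longest_edge E x /\ ~ on_shortest_nonedge E x) ->
          s < (3 * n)%:R / 4 + e / 4 &
        (exists x, on_shortest_nonedge E x /\ ~ on_longest_edge E x) ->
          (3 * n)%:R / 4 - e / 4 < s].
Proof.
move=> hn hopt.
have [a0 [b0 [c0 [_ _ hne0]]]] := some_triple hn hopt.
have [al hal] := alpha_some hne0.
exists al; split => //.
have hE : cid2 E by case: hopt.
have hbn : (betaG E < n)%N := beta_lt E a0.
have ha2 := a_half hn hal.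
have low : (3 * n + (al < betaG E) <= 4 * al + 2 + 2 * (betaG E + betaG E))%N.
  have [u [v [h d]]] := aex hal.
  apply: (B_bound hn hopt hal h d) => // c hc; exact: beta_ge.
have up : (4 * (al + betaG E) + (al < betaG E) + 2 * (false || false) <= 3 * n + 2)%N.
  have [u [v [h d]]] := longest hn hopt.
  by apply: (A_bound hn hopt hal h d (iv := false) (iu := false)).
have upI : (exists x, on_longest_edge E x /\ ~ on_shortest_nonedge E x) ->
    (4 * (al + betaG E) + (al < betaG E) <= 3 * n)%N.
  case=> z [[u [v /and3P[huv /eqP hb hinc]]] hns].
  have := A_bound hn hopt hal huv hb (iv := z == v) (iu := z == u).
  have -> : (z == v) || (z == u) = true by move: hinc; rewrite /incident orbC.
  move=> H; have : (4 * (al + betaG E) + (al < betaG E) + 2 <= 3 * n + 2)%N.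
    apply: H.
    - move=> /eqP ez c hc; apply/negP => /eqP dc; apply: hns.
      by exists v, c; split => //; [rewrite dc | rewrite /incident ez eqxx].
    - move=> /eqP ez c hc; apply/negP => /eqP dc; apply: hns.
      by exists c, u; split => //; [rewrite dc | rewrite /incident ez eqxx orbT].
  lia.
have lowI : (exists x, on_shortest_nonedge E x /\ ~ on_longest_edge E x) ->
    (3 * n + (al < betaG E) <= 4 * al + 4 * betaG E)%N.
  case=> z [[u [v [hne hdu hinc]]] hnl].
  have hd : dist u v = al by move: hdu; rewrite hal => -[].
  have nuv : u != v by case/and3P: hne.
  have hkx : (betaG E - (z == v) < n)%N by lia.
  have hky : (betaG E - (z == u) < n)%N by lia.
  have := B_bound hn hopt hal hne hd hkx hky.
  have hzz : ((z == v) + (z == u) = 1)%N.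
    move: hinc; rewrite /incident.
    case: (eqVneq z u) => [->|]; first by rewrite (negbTE nuv).
    by case: (eqVneq z v).
  move=> H; have : (3 * n + (al < betaG E) <= 4 * al + 2 + 2 * (betaG E - (z == v) + (betaG E - (z == u))))%N.
    apply: H.
    - move=> c hc; have := beta_ge hc.
      case: (eqVneq z v) => [ez|] /=; last by rewrite subn0.
      move=> hle; have : dist v c != betaG E.
        apply/negP => /eqP dc; apply: hnl; exists v, c.
        by rewrite hc dc eqxx /incident ez eqxx.
      rewrite neq_ltn => /orP[|]; lia.
    - move=> c hc; have := beta_ge hc.
      case: (eqVneq z u) => [ez|] /=; last by rewrite subn0.
      move=> hle; have : dist c u != betaG E.
        apply/negP => /eqP dc; apply: hnl; exists c, u.
        by rewrite hc dc eqxx /incident ez eqxx orbT.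
      rewrite neq_ltn => /orP[|]; lia.
  lia.
rewrite /epsG hal.
case: (ltnP al (betaG E)) low up upI lowI => hl low up upI lowI /=.
- split.
  + have L : (3 * n < 4 * (al + betaG E) + 2)%N by lia.
    have := rat_lt L.
    rewrite ?natrD ?natrM => H; lra.
  + have L : (4 * (al + betaG E) < 3 * n + 2)%N by lia.
    have := rat_lt L.
    rewrite ?natrD ?natrM => H; lra.
  + move/upI => h.
    have L : (4 * (al + betaG E) < 3 * n)%N by lia.
    have := rat_lt L.
    rewrite ?natrD ?natrM => H; lra.
  + move/lowI => h.
    have L : (3 * n < 4 * (al + betaG E))%N by lia.
    have := rat_lt L.
    rewrite ?natrD ?natrM => H; lra.
- split.
  + have L : (3 * n < 4 * (al + betaG E) + 3)%N by lia.
    have := rat_lt L.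
    rewrite ?natrD ?natrM => H; lra.
  + have L : (4 * (al + betaG E) < 3 * n + 3)%N by lia.
    have := rat_lt L.
    rewrite ?natrD ?natrM => H; lra.
  + move/upI => h.
    have L : (4 * (al + betaG E) < 3 * n + 1)%N by lia.
    have := rat_lt L.
    rewrite ?natrD ?natrM => H; lra.
  + move/lowI => h.
    have L : (3 * n < 4 * (al + betaG E) + 1)%N by lia.
    have := rat_lt L.
    rewrite ?natrD ?natrM => H; lra.
Qed.
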